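(* In the setting described in the context, fix $i\in[m]$, $b_{i0}\in\mathbb{R}$, $b_i\in\mathbb{R}^n$, and let $z_i^L=\min_{x\in P}\frac{b_{i0}+b_i^\top x}{a_{i0}+a_i^\top x}$, $z_i^U=\max_{x\in P}\frac{b_{i0}+b_i^\top x}{a_{i0}+a_i^\top x}$, $d_i^L=\min_{x\in P}(a_{i0}+a_i^\top x)>0$, $d_i^U=\max_{x\in P}(a_{i0}+a_i^\top x)$. Then every $(\rho,y,x)\in\mathcal{R}_{\mathrm{QP}}$, with $\zeta_i:=b_{i0}\rho^i+b_i^\top y^i$ and $\delta_i:=a_{i0}+a_i^\top x$, satisfies the McCormick inequalities obtained by relaxing $\zeta_i\delta_i=b_{i0}+b_i^\top x$: \[ \begin{aligned} b_{i0}+b_i^\top x&\ge z_i^L\delta_i+d_i^L\zeta_i-z_i^Ld_i^L, & b_{i0}+b_i^\top x&\ge z_i^U\delta_i+d_i^U\zeta_i-z_i^Ud_i^U,\\ b_{i0}+b_i^\top x&\le z_i^U\delta_i+d_i^L\zeta_i-z_i^Ud_i^L, & b_{i0}+b_i^\top x&\le z_i^L\delta_i+d_i^U\zeta_i-z_i^Ld_i^U. \end{aligned} \]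
   Context: Let $m,n,p$ be integers with $0\le p\le n$, $a_{i0}\in\mathbb{R}$, $a_i\in\mathbb{R}^n$ ($i\in[m]$), and let $\bar Cx\le\bar d$ be a linear system that includes $0\le x_j\le1$ for $j\in[p]$. Let $P=\{x\mid\bar Cx\le\bar d\}$, assumed nonempty and bounded, with $a_{i0}+a_i^\top x>0$ on $P$ for all $i$. $\mathcal{R}_{\mathrm{QP}}$ is the set of $(\rho,y,x)$, $\rho=(\rho^i)_{i\in[m]}$, $y=(y^i)_{i\in[m]}$, $y^i\in\mathbb{R}^n$, $x\in\mathbb{R}^n$, for which there exist $W^1,\dots,W^m\in\mathbb{R}^{n\times n}$ with, for all $i\in[m]$: $\bar CW^i\bar C^\top-\bar d(y^i)^\top\bar C^\top-\bar Cy^i\bar d^\top+\rho^i\bar d\bar d^\top\ge0$ (entrywise); $a_{i0}\rho^i+a_i^\top y^i=1$; $\rho^i\ge0$; $x_j=a_{i0}y^i_j+\sum_{k=1}^na_{ik}W^i_{jk}$ for $j\in[n]$; $\bar Cy^i\le\rho^i\bar d$; $W^i_{jj}=y^i_j$ for $j\in[p]$; and $\bar Cx\le\bar d$. *)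

(* Defs.v *)
From HB Require Import structures.
From mathcomp Require Import all_boot all_order all_algebra.
Set Implicit Arguments. Unset Strict Implicit. Unset Printing Implicit Defensive.
Import Order.TTheory GRing.Theory Num.Theory.
Local Open Scope ring_scope.

Definition affine (R : realFieldType) (n : nat) (a0 : R) (a x : 'cV[R]_n) : R :=
  a0 + \sum_(j < n) a j 0 * x j 0.

Definition inP (R : realFieldType) (k n : nat) (C : 'M[R]_(k, n)) (d : 'cV[R]_k)
  (x : 'cV[R]_n) : Prop :=
  forall r : 'I_k, (C *m x) r 0 <= d r 0.

(* The system C x <= d contains the rows  x_j <= 1  and  -x_j <= 0  for j in [p]. *)
Definition has_box_rows (R : realFieldType) (k n p : nat) (C : 'M[R]_(k, n))
  (d : 'cV[R]_k) : Prop :=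
  forall j : 'I_n, (j < p)%N ->
    (exists r : 'I_k, (forall l : 'I_n, C r l = (l == j)%:R) /\ d r 0 = 1) /\
    (exists r : 'I_k, (forall l : 'I_n, C r l = - (l == j)%:R) /\ d r 0 = 0).

Definition bounded_set (R : realFieldType) (n : nat) (S : 'cV[R]_n -> Prop) : Prop :=
  exists M : R, forall x, S x -> forall j : 'I_n, `|x j 0| <= M.

Definition is_min_on (R : realFieldType) (n : nat) (S : 'cV[R]_n -> Prop)
  (f : 'cV[R]_n -> R) (z : R) : Prop :=
  (exists x, S x /\ f x = z) /\ (forall x, S x -> z <= f x).
Definition is_max_on (R : realFieldType) (n : nat) (S : 'cV[R]_n -> Prop)
  (f : 'cV[R]_n -> R) (z : R) : Prop :=
  (exists x, S x /\ f x = z) /\ (forall x, S x -> f x <= z).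

Definition R_QP (R : realFieldType) (m n p k : nat) (C : 'M[R]_(k, n)) (d : 'cV[R]_k)
  (a0 : 'I_m -> R) (a : 'I_m -> 'cV[R]_n)
  (rho : 'I_m -> R) (y : 'I_m -> 'cV[R]_n) (x : 'cV[R]_n) : Prop :=
  exists W : 'I_m -> 'M[R]_n,
    (forall i : 'I_m,
      (forall r s : 'I_k,
         0 <= (C *m W i *m C^T - d *m (y i)^T *m C^T - C *m y i *m d^T
               + rho i *: (d *m d^T)) r s) /\
      a0 i * rho i + \sum_(j < n) a i j 0 * y i j 0 = 1 /\
      0 <= rho i /\
      (forall j : 'I_n, x j 0 = a0 i * y i j 0 + \sum_(l < n) a i l 0 * W i j l) /\
      (forall r : 'I_k, (C *m y i) r 0 <= rho i * d r 0) /\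
      (forall j : 'I_n, (j < p)%N -> W i j j = y i j 0)) /\
    inP C d x.

(* Main.v *)
Require Import Defs.
From HB Require Import structures.
From mathcomp Require Import all_boot all_order all_algebra.
From mathcomp Require Import ring lra.
Import Order.TTheory GRing.Theory Num.Theory.
Local Open Scope ring_scope.

Section FM.
Variable R : realFieldType.

Lemma choose_t (I : finType) (e a : I -> R) :
  (forall i, a i = 0 -> 0 <= e i) ->
  (forall p q, 0 < a p -> a q < 0 -> 0 <= - a q * e p + a p * e q) ->
  exists t, forall i, 0 <= e i + a i * t.
Proof.
move=> H0 Hpq.
case: (pickP (fun p => 0 < a p)) => [p0 Hp0|Hnone].
  case: (@arg_maxP _ _ I p0 (fun p => 0 < a p) (fun p => - e p / a p) Hp0)
    => pm Hpm Hmax.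
  exists (- e pm / a pm) => i.
  have ht : a pm * (- e pm / a pm) = - e pm.
    by rewrite mulrC -mulrA mulVf ?mulr1 // gt_eqF.
  case: (ltrgtP (a i) 0) => Hi.
  - rewrite -(pmulr_rge0 _ Hpm).
    have := Hpq pm i Hpm Hi.
    set t := (- e pm / a pm) in ht *.
    have : a i * (a pm * t) = a i * (- e pm) by rewrite ht.
    nra.
  - have := Hmax i Hi; rewrite /= => Hle.
    have hx : - e i / a i * a i = - e i by rewrite mulrVK ?unitfE ?gt_eqF.
    have : 0 <= (- e pm / a pm - (- e i / a i)) * a i.
      by apply: mulr_ge0; [rewrite subr_ge0 | apply: ltW].
    set t := (- e pm / a pm). set u := - e i / a i in hx Hle *. nra.
  - by rewrite Hi mul0r addr0; apply: H0.
case: (pickP (fun p => a p < 0)) => [p0 Hp0|Hnone2].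
  case: (@arg_minP _ _ I p0 (fun p => a p < 0) (fun p => - e p / a p) Hp0)
    => pm Hpm Hmin.
  exists (- e pm / a pm) => i.
  case: (ltrgtP (a i) 0) => Hi.
  - have := Hmin i Hi; rewrite /= => Hle.
    have hx : - e i / a i * a i = - e i by rewrite mulrVK ?unitfE ?lt_eqF.
    have : 0 <= (- e i / a i - (- e pm / a pm)) * (- a i).
      by apply: mulr_ge0; [rewrite subr_ge0 | rewrite oppr_ge0 ltW].
    set t := (- e pm / a pm). set u := - e i / a i in hx Hle *. nra.
  - by move: (Hnone i); rewrite /= Hi.
  - by rewrite Hi mul0r addr0; apply: H0.
exists 0 => i; rewrite mulr0 addr0; apply: H0.
case: (ltrgtP (a i) 0) => Hi //.
- by move: (Hnone2 i); rewrite /= Hi.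
- by move: (Hnone i); rewrite /= Hi.
Qed.

Definition ev N (c0 : R) (c : nat -> R) (x : nat -> R) := c0 + \sum_(j < N) c j * x j.

Lemma sum_ind (I : finType) (i0 : I) (g : I -> R) :
  \sum_i (i == i0)%:R * g i = g i0.
Proof.
rewrite (bigD1 i0) //= eqxx mul1r big1 ?addr0 // => i /negPf ->.
by rewrite mul0r.
Qed.

Lemma sum_swap (I K : finType) (l : K -> R) (E : K -> I -> R) (f : I -> R) :
  \sum_i (\sum_k l k * E k i) * f i = \sum_k l k * \sum_i E k i * f i.
Proof.
under eq_bigr do rewrite mulr_suml.
rewrite exchange_big; apply: eq_bigr => k _; rewrite mulr_sumr.
by apply: eq_bigr => i _; rewrite mulrA.
Qed.

Lemma fm N : forall (I : finType) (c0 : I -> R) (c : I -> nat -> R),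
  (forall x, exists i, ev N (c0 i) (c i) x < 0) ->
  exists lam : I -> R, (forall i, 0 <= lam i) /\
    (forall j, (j < N)%N -> \sum_i lam i * c i j = 0) /\
    \sum_i lam i * c0 i < 0.
Proof.
elim: N => [|N IH] I c0 c Hinf.
  have [i Hi] := Hinf (fun _ => 0).
  rewrite /ev big_ord0 addr0 in Hi.
  exists (fun i' => (i' == i)%:R); split; first by move=> ?; apply: ler0n.
  by split=> //; rewrite sum_ind.
pose a i := c i N.
pose E (k : (I + (I * I))%type) (i : I) : R :=
  match k with
  | inl i0 => ((i == i0) && (a i0 == 0))%:R
  | inr pq => if (0 < a pq.1) && (a pq.2 < 0) then
                (i == pq.1)%:R * - a pq.2 + (i == pq.2)%:R * a pq.1 else 0
  end.
have E_ge0 : forall k i, 0 <= E k i.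
  case=> [i0|[p q]] i /=; first by apply: ler0n.
  case: ifP => // /andP [hp hq].
  apply: addr_ge0; apply: mulr_ge0; rewrite ?ler0n ?oppr_ge0 ?ltW //.
have sumE : forall k f, \sum_i E k i * f i =
   match k with
   | inl i0 => if a i0 == 0 then f i0 else 0
   | inr pq => if (0 < a pq.1) && (a pq.2 < 0) then
                - a pq.2 * f pq.1 + a pq.1 * f pq.2 else 0
   end.
  case=> [i0|[p q]] f /=.
    case: eqP => h.
      by under eq_bigr do rewrite andbT; apply: sum_ind.
    by rewrite big1 // => i _; rewrite andbF mul0r.
  case: ifP => h; last by rewrite big1 // => i _; rewrite mul0r.
  under eq_bigr do rewrite mulrDl; rewrite big_split /=.
  rewrite -(@sum_ind I p (fun i => - a q * f i)) -(@sum_ind I q (fun i => a p * f i)).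
  by congr (_ + _); apply: eq_bigr => i _; rewrite mulrA.
pose c0' k := \sum_i E k i * c0 i.
pose c' k j := \sum_i E k i * c i j.
have evE : forall k x, ev N (c0' k) (c' k) x = \sum_i E k i * ev N (c0 i) (c i) x.
  move=> k x; rewrite /ev /c0' /c'.
  under [in RHS]eq_bigr do rewrite mulrDr mulr_sumr.
  rewrite big_split /=; congr (_ + _).
  rewrite exchange_big; apply: eq_bigr => j _; rewrite mulr_suml.
  by apply: eq_bigr => i _; rewrite mulrA.
have Hinf' : forall x', exists k, ev N (c0' k) (c' k) x' < 0.
  move=> x'.
  case: (pickP (fun k => ev N (c0' k) (c' k) x' < 0)) => [k Hk|Hno].
    by exists k.
  exfalso.
  have Hge : forall k, 0 <= \sum_i E k i * ev N (c0 i) (c i) x'.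
    by move=> k; rewrite -evE; move: (Hno k) => /=; rewrite ltNge => /negbFE.
  pose e := fun i => ev N (c0 i) (c i) x'.
  have [t Ht] : exists t, forall i, 0 <= e i + a i * t.
    apply: choose_t.
    - by move=> i hi; have := Hge (inl i); rewrite sumE hi eqxx.
    - by move=> p q hp hq; have := Hge (inr (p, q)); rewrite sumE /= hp hq.
  pose x j := if j == N then t else x' j.
  have [i Hi] := Hinf x.
  have h2 : ev N.+1 (c0 i) (c i) x = e i + a i * t.
    rewrite /ev big_ord_recr /= /x eqxx addrA /e /ev; congr (_ + _ + _).
    by apply: eq_bigr => j _; rewrite ltn_eqF.
  by move: Hi; rewrite h2 ltNge Ht.
have [lam' [H1 [H2 H3]]] := IH _ c0' c' Hinf'.
exists (fun i => \sum_k lam' k * E k i); split; [|split].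
- by move=> i; apply: sumr_ge0 => k _; apply: mulr_ge0.
- move=> j; rewrite ltnS leq_eqVlt => /orP [/eqP ->|hj].
    rewrite sum_swap big1 // => k _.
    rewrite (sumE k (fun i => c i N)) -/(a _).
    rewrite /a; case: k => [i0|[p q]] /=.
      by case: eqP => [h|_]; rewrite ?h mulr0.
    by case: ifP => _; rewrite ?mulr0 // (mulrC (c p N)) mulNr addNr mulr0.
  by rewrite sum_swap; apply: H2.
- by rewrite sum_swap.
Qed.

Definition cn n (f : 'I_n -> R) (j : nat) : R :=
  match insub j with Some j' => f j' | None => 0 end.
Arguments cn {n}.

Lemma cnE n (f : 'I_n -> R) (j : 'I_n) : cn f j = f j.
Proof. by rewrite /cn valK. Qed.

Lemma evsplit n (alpha : R) (f : 'I_n -> R) (X : nat -> R) :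
  \sum_(j < n.+1) (if (j : nat) == n then alpha else cn f j) * X j =
  \sum_(j < n) f j * X j + alpha * X n.
Proof.
rewrite big_ord_recr /= eqxx; congr (_ + _).
by apply: eq_bigr => j _; rewrite ltn_eqF // cnE.
Qed.

Lemma inPE k n (C : 'M[R]_(k, n)) d x :
  inP C d x <-> forall r, \sum_l C r l * x l 0 <= d r 0.
Proof.
by split=> H r; move: (H r); rewrite mxE.
Qed.

Lemma farkas (n k : nat) (C : 'M[R]_(k, n)) (d : 'cV[R]_k) (x0 : 'cV[R]_n)
  (Hx0 : inP C d x0) (u0 : R) (u : 'I_n -> R)
  (Hu : forall x, inP C d x -> 0 <= u0 + \sum_j u j * x j 0) :
  exists mu (lam : 'I_k -> R), 0 <= mu /\ (forall r, 0 <= lam r) /\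
    u0 = mu + \sum_r lam r * d r 0 /\ forall j, u j = \sum_r lam r * - C r j.
Proof.
pose c : ('I_k + bool)%type -> nat -> R := fun i =>
  match i with
  | inl r => fun j => if j == n then d r 0 else cn (fun l => - C r l) j
  | inr true => fun j => if j == n then 1 else cn (fun _ : 'I_n => 0) j
  | inr false => fun j => if j == n then - u0 else cn (fun l => - u l) j
  end.
pose c0 : ('I_k + bool)%type -> R := fun i =>
  match i with inr false => -1 | _ => 0 end.
have Hinf : forall X, exists i, ev n.+1 (c0 i) (c i) X < 0.
  move=> X.
  case: (pickP (fun i => ev n.+1 (c0 i) (c i) X < 0)) => [i Hi|Hno].
    by exists i.
  exfalso.
  have Hge : forall i, 0 <= ev n.+1 (c0 i) (c i) X.
    by move=> i; move: (Hno i) => /=; rewrite ltNge => /negbFE.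
  have Hr : forall r, 0 <= X n * d r 0 - \sum_l C r l * X l.
    move=> r; move: (Hge (inl r)); rewrite /ev /= evsplit add0r.
    have -> : \sum_(j < n) - C r j * X j = - \sum_l C r l * X l.
      by rewrite -sumrN; apply: eq_bigr => j _; rewrite mulNr.
    by rewrite addrC mulrC.
  have Ht : 0 <= X n.
    move: (Hge (inr true)); rewrite /ev /= evsplit add0r big1 ?add0r ?mul1r //.
    by move=> j _; rewrite mul0r.
  have Hf : 0 <= -1 - u0 * X n - \sum_l u l * X l.
    move: (Hge (inr false)); rewrite /ev /= evsplit.
    have -> : \sum_(j < n) - u j * X j = - \sum_l u l * X l.
      by rewrite -sumrN; apply: eq_bigr => j _; rewrite mulNr.
    by rewrite mulNr; lra.
  have Hv0 := Hu x0 Hx0.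
  case: (ltrgtP (X n) 0) => Htn.
  - by move: Ht; rewrite leNgt Htn.
  - pose x := \col_(j < n) ((X n)^-1 * X j).
    have Hx : inP C d x.
      apply/inPE => r.
      have -> : \sum_l C r l * x l 0 = (X n)^-1 * \sum_l C r l * X l.
        rewrite mulr_sumr; apply: eq_bigr => l _; rewrite mxE; ring.
      rewrite ler_pdivrMl //; move: (Hr r); lra.
    have := Hu x Hx.
    have -> : \sum_j u j * x j 0 = (X n)^-1 * \sum_l u l * X l.
      rewrite mulr_sumr; apply: eq_bigr => l _; rewrite mxE; ring.
    move=> H.
    have : 0 <= X n * (u0 + (X n)^-1 * \sum_l u l * X l) by apply: mulr_ge0 => //; apply: ltW.
    rewrite mulrDr mulrA mulfV ?gt_eqF // mul1r.
    lra.
  - set s := u0 + \sum_j u j * x0 j 0 + 1.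
    pose x := \col_(j < n) (x0 j 0 + s * X j).
    have Hs : 0 <= s by rewrite /s; lra.
    have Hx : inP C d x.
      apply/inPE => r.
      have -> : \sum_l C r l * x l 0 = \sum_l C r l * x0 l 0 + s * \sum_l C r l * X l.
        rewrite mulr_sumr -big_split; apply: eq_bigr => l _; by rewrite mxE mulrDr mulrCA.
      move/inPE: Hx0 => /(_ r) H0.
      have := Hr r; rewrite Htn mul0r sub0r oppr_ge0 => H1.
      have : s * \sum_l C r l * X l <= 0 by rewrite mulr_ge0_le0.
      lra.
    have := Hu x Hx.
    have -> : \sum_j u j * x j 0 = \sum_l u l * x0 l 0 + s * \sum_l u l * X l.
      rewrite mulr_sumr -big_split; apply: eq_bigr => l _; by rewrite mxE mulrDr mulrCA.
    move: Hf; rewrite Htn mulr0 subr0 => Hf.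
    have : s * (\sum_l u l * X l) <= s * (-1) by rewrite ler_wpM2l //; lra.
    rewrite /s; lra.
have [lam [Hl0 [Hlj Hlc]]] := @fm n.+1 _ c0 c Hinf.
have Hsum : forall F : ('I_k + bool)%type -> R,
    \sum_i F i = \sum_r F (inl r) + (F (inr true) + F (inr false)).
  by move=> F; rewrite big_sumType /= big_bool.
move: Hlc; rewrite Hsum /= big1 ?mulr0 ?add0r; last by move=> r _; rewrite mulr0.
rewrite mulrN1 oppr_lt0 => Hnu.
set nu := lam (inr false) in Hnu *.
exists (lam (inr true) / nu), (fun r => lam (inl r) / nu); split; [|split; [|split]].
- by apply: divr_ge0 => //; apply: ltW.
- by move=> r; apply: divr_ge0 => //; apply: ltW.
- have := Hlj n (ltnSn n); rewrite Hsum /= !eqxx mulr1.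
  move=> H.
  have -> : \sum_r lam (inl r) / nu * d r 0 = (\sum_r lam (inl r) * d r 0) / nu.
    rewrite mulr_suml; apply: eq_bigr => r _; rewrite mulrAC //.
  rewrite -mulrDl.
  have -> : \sum_r lam (inl r) * d r 0 = - (lam (inr true) + nu * - u0).
    by move: H; rewrite /nu; lra.
  rewrite opprD addrA subrr add0r mulrN opprK mulrC mulrA mulVf ?gt_eqF ?mul1r //.
- move=> j.
  have := Hlj j (ltn_trans (ltn_ord j) (ltnSn n)); rewrite Hsum /=.
  rewrite !ltn_eqF //= !cnE mulr0 add0r; under eq_bigr do rewrite cnE; move=> H.
  have -> : \sum_r lam (inl r) / nu * - C r j = (\sum_r lam (inl r) * - C r j) / nu.
    rewrite mulr_suml; apply: eq_bigr => r _; rewrite mulrAC //.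
  have -> : \sum_r lam (inl r) * - C r j = - (nu * - u j).
    by move: H; rewrite /nu; lra.
  rewrite mulrN opprK mulrC mulrA mulVf ?gt_eqF ?mul1r //.
Qed.
End FM.

Section Q.
Variable R : realFieldType.
Variables (n k : nat) (C : 'M[R]_(k, n)) (d : 'cV[R]_k).
Variables (rho : R) (y : 'cV[R]_n) (W : 'M[R]_n).

Definition Q (u0 : R) (u : 'I_n -> R) (v0 : R) (v : 'I_n -> R) : R :=
  u0 * rho * v0 + u0 * \sum_l y l 0 * v l + v0 * \sum_j u j * y j 0
  + \sum_j \sum_l u j * W j l * v l.

Lemma Q_altl u0 u v0 v : Q u0 u v0 v =
  u0 * (rho * v0 + \sum_l y l 0 * v l) + \sum_j u j * (v0 * y j 0 + \sum_l W j l * v l).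
Proof.
rewrite /Q mulrDr mulrA -!addrA; congr (_ + _); congr (_ + _).
rewrite mulr_sumr -big_split; apply: eq_bigr => j _.
rewrite mulrDr mulr_sumr; congr (_ + _); first ring.
by apply: eq_bigr => l _; rewrite mulrA.
Qed.

Lemma Q_altr u0 u v0 v : Q u0 u v0 v =
  v0 * (u0 * rho + \sum_j u j * y j 0) + \sum_l v l * (u0 * y l 0 + \sum_j u j * W j l).
Proof.
rewrite /Q mulrDr -!addrA; congr (_ + _); first ring.
rewrite addrCA; congr (_ + _).
rewrite exchange_big mulr_sumr -big_split; apply: eq_bigr => l _.
rewrite mulrDr mulr_sumr; congr (_ + _); first ring.
by apply: eq_bigr => j _; ring.
Qed.

Lemma lin_comb (K : finType) (mu : R) (lam : K -> R) (g0 : K -> R)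
   (g : K -> 'I_n -> R) (A : R) (B : 'I_n -> R) :
  (mu + \sum_r lam r * g0 r) * A + \sum_j (\sum_r lam r * g r j) * B j =
  mu * A + \sum_r lam r * (g0 r * A + \sum_j g r j * B j).
Proof.
rewrite mulrDl -addrA; congr (_ + _).
rewrite mulr_suml; under [in RHS]eq_bigr do rewrite mulrDr.
rewrite big_split /=; congr (_ + _); first by apply: eq_bigr => r _; rewrite mulrA.
under eq_bigr do rewrite mulr_suml.
rewrite exchange_big; apply: eq_bigr => r _; rewrite mulr_sumr.
by apply: eq_bigr => j _; rewrite mulrA.
Qed.

Lemma Q_linl (K : finType) mu (lam : K -> R) g0 g u0 u v0 v :
  u0 = mu + \sum_r lam r * g0 r -> (forall j, u j = \sum_r lam r * g r j) ->
  Q u0 u v0 v = mu * Q 1 (fun _ => 0) v0 v + \sum_r lam r * Q (g0 r) (g r) v0 v.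
Proof.
move=> -> hu; rewrite Q_altl.
have -> : \sum_j u j * (v0 * y j 0 + \sum_l W j l * v l) =
   \sum_j (\sum_r lam r * g r j) * (v0 * y j 0 + \sum_l W j l * v l).
  by apply: eq_bigr => j _; rewrite hu.
rewrite lin_comb; congr (_ + _).
  by rewrite Q_altl mul1r [X in _ = _ * (_ + X)]big1 ?addr0 // => j _; rewrite mul0r.
by apply: eq_bigr => r _; rewrite Q_altl.
Qed.

Lemma Q_linr (K : finType) mu (lam : K -> R) g0 g u0 u v0 v :
  v0 = mu + \sum_r lam r * g0 r -> (forall j, v j = \sum_r lam r * g r j) ->
  Q u0 u v0 v = mu * Q u0 u 1 (fun _ => 0) + \sum_r lam r * Q u0 u (g0 r) (g r).
Proof.
move=> -> hv; rewrite Q_altr.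
have -> : \sum_l v l * (u0 * y l 0 + \sum_j u j * W j l) =
   \sum_l (\sum_r lam r * g r l) * (u0 * y l 0 + \sum_j u j * W j l).
  by apply: eq_bigr => j _; rewrite hv.
rewrite lin_comb; congr (_ + _).
  by rewrite Q_altr mul1r [X in _ = _ * (_ + X)]big1 ?addr0 // => j _; rewrite mul0r.
by apply: eq_bigr => r _; rewrite Q_altr.
Qed.

Hypothesis hrho : 0 <= rho.
Hypothesis hy : forall r, (C *m y) r 0 <= rho * d r 0.
Hypothesis hmat : forall r s : 'I_k,
  0 <= (C *m W *m C^T - d *m y^T *m C^T - C *m y *m d^T + rho *: (d *m d^T)) r s.

Lemma Q00 : Q 1 (fun _ => 0) 1 (fun _ => 0) = rho.
Proof.
by rewrite Q_altl mul1r mulr1 !big1 ?addr0 ?mul1r // => j _; rewrite ?mulr0 ?mul0r.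
Qed.

Lemma Q0s s : 0 <= Q 1 (fun _ => 0) (d s 0) (fun l => - C s l).
Proof.
rewrite Q_altl mul1r [X in _ + X]big1 ?addr0; last by move=> j _; rewrite mul0r.
have := hy s; rewrite mxE.
have -> : \sum_l y l 0 * - C s l = - \sum_j C s j * y j 0.
  by rewrite -sumrN; apply: eq_bigr => j _; rewrite mulrN mulrC.
lra.
Qed.

Lemma Qr0 r : 0 <= Q (d r 0) (fun j => - C r j) 1 (fun _ => 0).
Proof.
rewrite Q_altr mul1r [X in _ + X]big1 ?addr0; last by move=> j _; rewrite mul0r.
have := hy r; rewrite mxE.
have -> : \sum_j - C r j * y j 0 = - \sum_j C r j * y j 0.
  by rewrite -sumrN; apply: eq_bigr => j _; rewrite mulNr.
lra.
Qed.

Lemma Qrs r s : 0 <= Q (d r 0) (fun j => - C r j) (d s 0) (fun l => - C s l).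
Proof.
have := hmat r s.
set S1 := \sum_j C r j * y j 0.
set S2 := \sum_l C s l * y l 0.
set S3 := \sum_l (\sum_j C r j * W j l) * C s l.
have -> : (C *m W *m C^T - d *m y^T *m C^T - C *m y *m d^T + rho *: (d *m d^T)) r s
   = S3 - d r 0 * S2 - S1 * d s 0 + rho * (d r 0 * d s 0).
  rewrite !mxE; congr (_ - _ - _ + _).
  - by rewrite /S3; apply: eq_bigr => l _; rewrite !mxE.
  - rewrite /S2 mulr_sumr; apply: eq_bigr => l _; rewrite !mxE big_ord1 !mxE.
    ring.
  - by rewrite big_ord1 !mxE.
  - by rewrite big_ord1 !mxE.
have -> : Q (d r 0) (fun j => - C r j) (d s 0) (fun l => - C s l) =
   d s 0 * (d r 0 * rho - S1) - d r 0 * S2 + S3.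
  rewrite Q_altr -addrA; congr (_ + _).
    congr (_ * (_ + _)); rewrite /S1 -sumrN; apply: eq_bigr => j _; by rewrite mulNr.
  rewrite /S2 /S3 -mulNr mulr_sumr -big_split; apply: eq_bigr => l _.
  rewrite mulrDr mulr_sumr mulr_suml; congr (_ + _); first ring.
  by apply: eq_bigr => j _; ring.
lra.
Qed.

Lemma sum_lin (f g h : 'I_n -> R) (al z : R) :
  \sum_j al * (f j - z * g j) * h j = al * (\sum_j f j * h j - z * \sum_j g j * h j).
Proof.
rewrite [RHS]mulrBr !mulr_sumr -sumrB; apply: eq_bigr => j _; ring.
Qed.

Lemma Q_ge0 (x0 : 'cV[R]_n) (Hx0 : inP C d x0) u0 u v0 v
  (Hu : forall x, inP C d x -> 0 <= u0 + \sum_j u j * x j 0)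
  (Hv : forall x, inP C d x -> 0 <= v0 + \sum_j v j * x j 0) : 0 <= Q u0 u v0 v.
Proof.
have [mu [lam [Hmu [Hlam [Hu0 Huj]]]]] := @farkas R n k C d x0 Hx0 u0 u Hu.
have [mu' [lam' [Hmu' [Hlam' [Hv0 Hvj]]]]] := @farkas R n k C d x0 Hx0 v0 v Hv.
rewrite (@Q_linl _ mu lam _ _ u0 u v0 v Hu0 Huj); apply: addr_ge0.
  apply: mulr_ge0 => //.
  rewrite (@Q_linr _ mu' lam' _ _ _ _ v0 v Hv0 Hvj) Q00; apply: addr_ge0; first exact: mulr_ge0.
  by apply: sumr_ge0 => s _; apply: mulr_ge0 => //; apply: Q0s.
apply: sumr_ge0 => r _; apply: mulr_ge0 => //.
rewrite (@Q_linr _ mu' lam' _ _ _ _ v0 v Hv0 Hvj); apply: addr_ge0; first by apply: mulr_ge0 => //; apply: Qr0.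
by apply: sumr_ge0 => s _; apply: mulr_ge0 => //; apply: Qrs.
Qed.

Variables (a0i : R) (a : 'cV[R]_n) (xx : 'cV[R]_n).
Hypothesis Hone : a0i * rho + \sum_j a j 0 * y j 0 = 1.
Hypothesis Hxj : forall j, xx j 0 = a0i * y j 0 + \sum_l a l 0 * W j l.

Lemma Qform u0 u sg s :
  Q u0 u (sg * a0i + s) (fun l => sg * a l 0) =
  sg * (u0 + \sum_j u j * xx j 0) + s * (u0 * rho + \sum_j u j * y j 0).
Proof.
set T1 := \sum_j u j * y j 0.
set T2 := \sum_l a l 0 * y l 0.
set T3 := \sum_l \sum_j a l 0 * (u j * W j l).
have e1 : \sum_l sg * a l 0 * (u0 * y l 0 + \sum_j u j * W j l) = sg * (u0 * T2 + T3).
  rewrite /T2 /T3 mulr_sumr -big_split mulr_sumr; apply: eq_bigr => l _.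
  by rewrite -mulrA mulrDr mulr_sumr mulrCA.
have e2 : \sum_j u j * xx j 0 = a0i * T1 + T3.
  rewrite /T1 /T3 exchange_big mulr_sumr -big_split; apply: eq_bigr => j _.
  rewrite Hxj mulrDr mulr_sumr; congr (_ + _); first ring.
  by apply: eq_bigr => l _; ring.
rewrite Q_altr e1 e2 -/T1.
have -> : u0 + (a0i * T1 + T3) = u0 * (a0i * rho + T2) + (a0i * T1 + T3).
  by rewrite Hone mulr1.
ring.
Qed.

Lemma mc (x0 : 'cV[R]_n) (Hx0 : inP C d x0) (b0 : R) (b : 'cV[R]_n) (tau z sg s : R)
  (Hu : forall x, inP C d x -> 0 <= tau * (affine b0 b x - z * affine a0i a x))
  (Hv : forall x, inP C d x -> 0 <= sg * affine a0i a x + s) :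
  0 <= sg * (tau * (affine b0 b xx - z * affine a0i a xx)) +
       s * (tau * ((b0 * rho + \sum_j b j 0 * y j 0) - z)).
Proof.
have Hu' : forall x, inP C d x -> 0 <= tau * (b0 - z * a0i) +
    \sum_j (fun j => tau * (b j 0 - z * a j 0)) j * x j 0.
  move=> x /Hu; rewrite sum_lin /affine.
  have -> : tau * (b0 + \sum_j b j 0 * x j 0 - z * (a0i + \sum_j a j 0 * x j 0)) =
    tau * (b0 - z * a0i) + tau * (\sum_j b j 0 * x j 0 - z * \sum_j a j 0 * x j 0) by ring.
  done.
have Hv' : forall x, inP C d x -> 0 <= (sg * a0i + s) +
    \sum_j (fun l => sg * a l 0) j * x j 0.
  move=> x /Hv; rewrite /affine.
  have -> : sg * (a0i + \sum_j a j 0 * x j 0) + s =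
    sg * a0i + s + sg * \sum_j a j 0 * x j 0 by ring.
  by rewrite mulr_sumr; under eq_bigr do rewrite mulrA.
have := @Q_ge0 x0 Hx0 _ (fun j => tau * (b j 0 - z * a j 0)) _ (fun l => sg * a l 0) Hu' Hv'; rewrite Qform.
have -> : \sum_j tau * (b j 0 - z * a j 0) * xx j 0 =
  tau * (\sum_j b j 0 * xx j 0 - z * \sum_j a j 0 * xx j 0) by rewrite sum_lin.
have -> : \sum_j tau * (b j 0 - z * a j 0) * y j 0 =
  tau * (\sum_j b j 0 * y j 0 - z * \sum_j a j 0 * y j 0) by rewrite sum_lin.
rewrite /affine.
have : \sum_j a j 0 * y j 0 = 1 - a0i * rho by rewrite -Hone; ring.
move=> ->.
have E1 : forall A B : R, tau * (b0 - z * a0i) + tau * (A - z * B) = tau * (b0 + A - z * (a0i + B)) by move=> A B; ring.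
rewrite E1.
have E2 : tau * (b0 - z * a0i) * rho + tau * (\sum_j b j 0 * y j 0 - z * (1 - a0i * rho)) =
  tau * (b0 * rho + \sum_j b j 0 * y j 0 - z) by ring.
by rewrite E2.
Qed.

End Q.

Theorem proposition6 (R : realFieldType) (m n p k : nat)
  (C : 'M[R]_(k, n)) (d : 'cV[R]_k) (a0 : 'I_m -> R) (a : 'I_m -> 'cV[R]_n)
  (hpn : (p <= n)%N)
  (hbox : has_box_rows p C d)
  (hne : exists x, inP C d x)
  (hbdd : bounded_set (inP C d))
  (hpos : forall (i : 'I_m) (x : 'cV[R]_n), inP C d x -> 0 < affine (a0 i) (a i) x)
  (i : 'I_m) (b0 : R) (b : 'cV[R]_n) (zL zU dL dU : R)
  (hzL : is_min_on (inP C d) (fun x => affine b0 b x / affine (a0 i) (a i) x) zL)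
  (hzU : is_max_on (inP C d) (fun x => affine b0 b x / affine (a0 i) (a i) x) zU)
  (hdL : is_min_on (inP C d) (fun x => affine (a0 i) (a i) x) dL)
  (hdU : is_max_on (inP C d) (fun x => affine (a0 i) (a i) x) dU)
  (rho : 'I_m -> R) (y : 'I_m -> 'cV[R]_n) (x : 'cV[R]_n)
  (hR : R_QP p C d a0 a rho y x) :
  let zeta := b0 * rho i + \sum_(j < n) b j 0 * y i j 0 in
  let delta := affine (a0 i) (a i) x in
  let lhs := affine b0 b x in
  [/\ zL * delta + dL * zeta - zL * dL <= lhs,
      zU * delta + dU * zeta - zU * dU <= lhs,
      lhs <= zU * delta + dL * zeta - zU * dL &
      lhs <= zL * delta + dU * zeta - zL * dU].
Proof.
move=> zeta delta lhs.
case: hR => W [HW Hx].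
case: (HW i) => Hmat [Hone [Hrho [Hxj [Hy _]]]].
have [x0 Hx0] := hne.
have Hpz : forall z xv, inP C d xv ->
   (z <= affine b0 b xv / affine (a0 i) (a i) xv) = (z * affine (a0 i) (a i) xv <= affine b0 b xv).
  by move=> z xv Hx'; rewrite ler_pdivlMr // hpos.
have Hpz' : forall z xv, inP C d xv ->
   (affine b0 b xv / affine (a0 i) (a i) xv <= z) = (affine b0 b xv <= z * affine (a0 i) (a i) xv).
  by move=> z xv Hx'; rewrite ler_pdivrMr // hpos.
have M := @mc R n k C d (rho i) (y i) (W i) Hrho Hy Hmat (a0 i) (a i) x Hone Hxj x0 Hx0.
have m1 := M b0 b 1 zL 1 (- dL).
have m2 := M b0 b (-1) zU (-1) dU.
have m3 := M b0 b (-1) zU 1 (- dL).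
have m4 := M b0 b 1 zL (-1) dU.
case: hzL => _ HzL. case: hzU => _ HzU. case: hdL => _ HdL. case: hdU => _ HdU.
have U1 : forall xv, inP C d xv -> 0 <= 1 * (affine b0 b xv - zL * affine (a0 i) (a i) xv).
  by move=> xv Hx'; have := HzL xv Hx'; rewrite /= Hpz // mul1r subr_ge0.
have U2 : forall xv, inP C d xv -> 0 <= -1 * (affine b0 b xv - zU * affine (a0 i) (a i) xv).
  by move=> xv Hx'; have := HzU xv Hx'; rewrite /= Hpz' // mulN1r oppr_ge0 subr_le0.
have V1 : forall xv, inP C d xv -> 0 <= 1 * affine (a0 i) (a i) xv + - dL.
  by move=> xv Hx'; have := HdL xv Hx'; rewrite mul1r subr_ge0.
have V2 : forall xv, inP C d xv -> 0 <= -1 * affine (a0 i) (a i) xv + dU.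
  by move=> xv Hx'; have := HdU xv Hx'; rewrite mulN1r addrC subr_ge0.
have h1 := m1 U1 V1. have h2 := m2 U2 V2. have h3 := m3 U2 V1. have h4 := m4 U1 V2.
rewrite /zeta /delta /lhs.
split; nra.
Qed.
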